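(* Let $m,n\ge1$ and $A,B\in\mathbb{R}_+^{m\times n}$. Then: (1) There exists $\mathbf{y}\in\mathbb{R}^n_+\setminus\{\mathbf{0}\}$ with $\hat\rho(A,B)=r(A,B,\mathbf{y})$, i.e. a weakly optimal vector exists. (2) There exists $\mathbf{y}\in\mathbb{R}^n_+\setminus\{\mathbf{0}\}$ with $\rho(A,B)=r(A,B,\mathbf{y})$ for which there is a sequence $\mathbf{y}_k>\mathbf{0}$, $k\in\mathbb{N}$, with $\lim_{k\to\infty}\mathbf{y}_k=\mathbf{y}$ and $\lim_{k\to\infty}r(A,B,\mathbf{y}_k)=\rho(A,B)$, i.e. an optimal vector exists.
   Context: $[m]=\{1,\dots,m\}$. For $A,B\in\mathbb{R}_+^{m\times n}$ (entrywise nonnegative real matrices) and $\mathbf{x}\in\mathbb{R}^n_+\setminus\{\mathbf{0}\}$, set $r(A,B,\mathbf{x})=\max_{i\in[m]}\frac{(A\mathbf{x})_i}{(B\mathbf{x})_i}\in[0,\infty]$ with the conventions $\frac00=0$ and $\frac c0=\infty$ for $c>0$; equivalently $r(A,B,\mathbf{x})=\inf\{t\ge 0: A\mathbf{x}\le tB\mathbf{x}\}$ (with $\inf\emptyset=\infty$). The Collatz–Wielandt quotient is $\rho(A,B)=\inf\{r(A,B,\mathbf{x}):\mathbf{x}>\mathbf{0}\}$ (infimum over vectors with all coordinates positive) and the weak Collatz–Wielandt quotient is $\hat\rho(A,B)=\inf\{r(A,B,\mathbf{x}):\mathbf{x}\in\mathbb{R}^n_+\setminus\{\mathbf{0}\}\}$.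 *)

(* Defs.v *)
From Stdlib Require Import Reals Lra.
Open Scope R_scope.

(* Extended nonnegative reals [0, oo]: finite values and infinity. *)
Inductive ER : Type := Fin (r : R) | Inf.

Definition ER_le (a b : ER) : Prop :=
  match a, b with
  | Fin x, Fin y => x <= y
  | _, Inf => True
  | Inf, Fin _ => False
  end.

Definition ER_max (a b : ER) : ER :=
  match a, b with
  | Fin x, Fin y => Fin (Rmax x y)
  | _, _ => Inf
  end.

Definition is_inf_ER (S : ER -> Prop) (v : ER) : Prop :=
  (forall w, S w -> ER_le v w) /\
  (forall u, (forall w, S w -> ER_le u w) -> ER_le u v).

Definition cv_ER (u : nat -> ER) (l : ER) : Prop :=
  match l with
  | Fin a => forall eps, eps > 0 -> exists N, forall k, (k >= N)%nat ->
               exists v, u k = Fin v /\ Rabs (v - a) < eps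
  | Inf => forall M, exists N, forall k, (k >= N)%nat -> ER_le (Fin M) (u k)
  end.

(* Matrices are functions nat -> nat -> R (entries (i,j) with i<m, j<n are
   used), vectors are functions nat -> R (coordinates j<n are used). *)
Fixpoint sumR (n : nat) (f : nat -> R) : R :=
  match n with O => 0 | S k => sumR k f + f k end.

Definition mulv (n : nat) (A : nat -> nat -> R) (x : nat -> R) (i : nat) : R :=
  sumR n (fun j => A i j * x j).

(* (Ax)_i / (Bx)_i with conventions 0/0 = 0, c/0 = oo for c > 0 *)
Definition quot (a b : R) : ER :=
  match Req_EM_T b 0 with
  | left _ => match Req_EM_T a 0 with left _ => Fin 0 | right _ => Inf end
  | right _ => Fin (a / b)
  end.

Fixpoint maxER (m : nat) (f : nat -> ER) : ER :=
  match m with O => Fin 0 | S k => ER_max (maxER k f) (f k) end.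

Definition rAB (m n : nat) (A B : nat -> nat -> R) (x : nat -> R) : ER :=
  maxER m (fun i => quot (mulv n A x i) (mulv n B x i)).

Definition nonneg_mat (m n : nat) (A : nat -> nat -> R) : Prop :=
  forall i j, (i < m)%nat -> (j < n)%nat -> 0 <= A i j.

Definition nonneg_nonzero (n : nat) (x : nat -> R) : Prop :=
  (forall j, (j < n)%nat -> 0 <= x j) /\ (exists j, (j < n)%nat /\ x j <> 0).

Definition positive_vec (n : nat) (x : nat -> R) : Prop :=
  forall j, (j < n)%nat -> 0 < x j.

Definition is_rho (m n : nat) (A B : nat -> nat -> R) (v : ER) : Prop :=
  is_inf_ER (fun w => exists x, positive_vec n x /\ w = rAB m n A B x) v.

Definition is_rho_hat (m n : nat) (A B : nat -> nat -> R) (v : ER) : Prop :=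
  is_inf_ER (fun w => exists x, nonneg_nonzero n x /\ w = rAB m n A B x) v.

(* Main.v *)
Require Import Defs.
From Stdlib Require Import Reals Lra Lia ClassicalEpsilon Classical.
Open Scope R_scope.

Lemma choice_nat (P : nat -> nat -> Prop) :
  (forall k, exists x, P k x) -> exists f : nat -> nat, forall k, P k (f k).
Proof.
  intros H. exists (fun k => proj1_sig (constructive_indefinite_description _ (H k))).
  intro k. exact (proj2_sig (constructive_indefinite_description _ (H k))).
Qed.

Lemma choice_vec (P : nat -> (nat -> R) -> Prop) :
  (forall k, exists x, P k x) -> exists f : nat -> nat -> R, forall k, P k (f k).
Proof.
  intros H. exists (fun k => proj1_sig (constructive_indefinite_description _ (H k))).
  intro k. exact (proj2_sig (constructive_indefinite_description _ (H k))).
Qed.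

Definition incr (phi : nat -> nat) := forall k, (phi k < phi (S k))%nat.

Lemma incr_mono phi : incr phi -> forall a b, (a < b)%nat -> (phi a < phi b)%nat.
Proof.
  intros H a b Hab. induction Hab.
  - apply H.
  - specialize (H m). lia.
Qed.

Lemma incr_ge phi : incr phi -> forall k, (k <= phi k)%nat.
Proof. intros H k; induction k; [lia|]. specialize (H k). lia. Qed.

Lemma incr_comp phi psi : incr phi -> incr psi -> incr (fun k => phi (psi k)).
Proof. intros H1 H2 k. apply incr_mono; auto. Qed.

Lemma cv_sub u l phi : incr phi -> Un_cv u l -> Un_cv (fun k => u (phi k)) l.
Proof.
  intros Hp Hu eps He. destruct (Hu eps He) as [N HN]. exists N.
  intros k Hk. apply HN. pose proof (incr_ge phi Hp k). lia.
Qed.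

Lemma cv_const c : Un_cv (fun _ => c) c.
Proof. intros eps He. exists O. intros. unfold Rdist. rewrite Rminus_diag, Rabs_R0. lra. Qed.

Lemma cv_inv_S : Un_cv (fun k => / INR (S k)) 0.
Proof.
  apply (cv_infty_cv_0 (fun k => INR (S k))).
  intro M. destruct (INR_unbounded M) as [N HN]. exists N. intros k Hk.
  apply le_INR in Hk. rewrite S_INR. lra.
Qed.

Lemma BW1 (u : nat -> R) : (forall k, 0 <= u k <= 1) ->
  exists psi l, incr psi /\ Un_cv (fun k => u (psi k)) l.
Proof.
  intros Hu. destruct (Bolzano_Weierstrass u (fun c => 0 <= c <= 1) (compact_P3 0 1) Hu) as [l Hl].
  assert (Hg : forall N k, exists p, (N <= p)%nat /\ Rabs (u p - l) < / INR (S k)).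
  { intros N k. assert (Hpos : 0 < / INR (S k)) by (apply Rinv_0_lt_compat, lt_0_INR; lia).
    destruct (Hl (disc l (mkposreal _ Hpos)) N) as [p [Hp1 Hp2]].
    - exists (mkposreal _ Hpos). intros y Hy; exact Hy.
    - exists p. split; auto. }
  assert (Hg2 : forall q, exists p, (fst q <= p)%nat /\ Rabs (u p - l) < / INR (S (snd q))).
  { intros [N k]; apply Hg. }
  set (g := fun q : nat * nat => proj1_sig (constructive_indefinite_description _ (Hg2 q))).
  assert (Hgs : forall q, (fst q <= g q)%nat /\ Rabs (u (g q) - l) < / INR (S (snd q))).
  { intro q. exact (proj2_sig (constructive_indefinite_description _ (Hg2 q))). }
  set (psi := fix psi k := match k with O => g (O, O) | S k' => g (S (psi k'), S k') end).
  exists psi, l. split.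
  - intro k. simpl. destruct (Hgs (S (psi k), S k)) as [H _]. simpl in H. lia.
  - assert (Hb : forall k, Rabs (u (psi k) - l) < / INR (S k)).
    { intro k; destruct k; simpl.
      - apply (proj2 (Hgs (O, O))).
      - apply (proj2 (Hgs (S (psi k), S k))). }
    intros eps He. destruct (cv_inv_S eps He) as [N HN]. exists N. intros k Hk.
    specialize (HN k Hk). unfold Rdist in *. rewrite Rminus_0_r in HN.
    rewrite Rabs_right in HN. 2:{ left. apply Rinv_0_lt_compat, lt_0_INR; lia. }
    specialize (Hb k). lra.
Qed.

Lemma BWn (n : nat) (x : nat -> nat -> R) :
  (forall k j, (j < n)%nat -> 0 <= x k j <= 1) ->
  exists phi z, incr phi /\ forall j, (j < n)%nat -> Un_cv (fun k => x (phi k) j) (z j).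
Proof.
  induction n as [|n IH]; intros Hx.
  - exists (fun k => k), (fun _ => 0). split. intro k; lia. intros; lia.
  - destruct IH as [phi [z [Hp Hz]]]. { intros k j Hj. apply Hx. lia. }
    destruct (BW1 (fun k => x (phi k) n)) as [psi [l [Hq Hl]]]. { intro k. apply Hx. lia. }
    exists (fun k => phi (psi k)), (fun j => if Nat.eqb j n then l else z j).
    split. { apply incr_comp; auto. }
    intros j Hj. destruct (Nat.eqb j n) eqn:E.
    + apply Nat.eqb_eq in E. subst. exact Hl.
    + apply Nat.eqb_neq in E. apply (cv_sub (fun k => x (phi k) j)); auto. apply Hz. lia.
Qed.

Lemma sumR_ext n f g : (forall j, (j < n)%nat -> f j = g j) -> sumR n f = sumR n g.
Proof. induction n; simpl; intros H; auto. rewrite IHn, H; auto. Qed.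

Lemma sumR_nonneg n f : (forall j, (j < n)%nat -> 0 <= f j) -> 0 <= sumR n f.
Proof. induction n; simpl; intros H. lra. pose proof (H n ltac:(lia)). pose proof (IHn ltac:(auto)). lra. Qed.

Lemma sumR_ge_term n f j : (forall j, (j < n)%nat -> 0 <= f j) -> (j < n)%nat -> f j <= sumR n f.
Proof.
  induction n; simpl; intros H Hj. lia.
  destruct (Nat.eq_dec j n).
  - subst. pose proof (sumR_nonneg n f ltac:(auto)). lra.
  - pose proof (IHn ltac:(auto) ltac:(lia)). pose proof (H n ltac:(lia)). lra.
Qed.

Lemma sumR_scal n c f : sumR n (fun j => c * f j) = c * sumR n f.
Proof. induction n; simpl. ring. rewrite IHn. ring. Qed.

Lemma sumR_plus n f g : sumR n (fun j => f j + g j) = sumR n f + sumR n g.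
Proof. induction n; simpl. ring. rewrite IHn. ring. Qed.

Lemma sumR_zero n f : (forall j, (j < n)%nat -> 0 <= f j) -> sumR n f = 0 ->
  forall j, (j < n)%nat -> f j = 0.
Proof.
  intros H Hs j Hj. pose proof (sumR_ge_term n f j H Hj). pose proof (H j Hj). lra.
Qed.

Lemma sumR_pos n f : (forall j, (j < n)%nat -> 0 <= f j) -> 0 < sumR n f ->
  exists j, (j < n)%nat /\ 0 < f j.
Proof.
  intros H Hs. apply NNPP. intro C.
  assert (forall j, (j < n)%nat -> f j = 0).
  { intros j Hj. destruct (Rle_lt_or_eq_dec 0 (f j) (H j Hj)); auto. exfalso; eauto. }
  rewrite (sumR_ext n f (fun _ => 0)) in Hs by auto.
  rewrite (sumR_ext n (fun _ => 0) (fun j => 0 * 1)) in Hs by (intros; ring).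
  rewrite sumR_scal in Hs. lra.
Qed.

Lemma sum_cv n (f : nat -> nat -> R) g :
  (forall j, (j < n)%nat -> Un_cv (fun k => f k j) (g j)) ->
  Un_cv (fun k => sumR n (f k)) (sumR n g).
Proof.
  induction n; simpl; intros H.
  - intros eps He. exists O. intros. unfold Rdist. rewrite Rminus_diag, Rabs_R0. lra.
  - apply CV_plus. apply IHn; auto. apply H; lia.
Qed.

Lemma mulv_nonneg m n A x i : nonneg_mat m n A -> (i < m)%nat ->
  (forall j, (j < n)%nat -> 0 <= x j) -> 0 <= mulv n A x i.
Proof.
  intros HA Hi Hx. unfold mulv. apply sumR_nonneg. intros j Hj.
  apply Rmult_le_pos; auto.
Qed.

Lemma mulv_lin n A y x c i :
  mulv n A (fun j => y j + c * x j) i = mulv n A y i + c * mulv n A x i.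
Proof.
  unfold mulv. rewrite <- sumR_scal, <- sumR_plus. apply sumR_ext. intros; ring.
Qed.

Lemma mulv_scal n A x c i : mulv n A (fun j => c * x j) i = c * mulv n A x i.
Proof. unfold mulv. rewrite <- sumR_scal. apply sumR_ext. intros; ring. Qed.

Lemma mulv_cv n A (x : nat -> nat -> R) z i :
  (forall j, (j < n)%nat -> Un_cv (fun k => x k j) (z j)) ->
  Un_cv (fun k => mulv n A (x k) i) (mulv n A z i).
Proof.
  intros H. unfold mulv. apply (sum_cv n (fun k j => A i j * x k j)).
  intros j Hj. apply CV_mult; auto.
  intros eps He. exists O. intros. unfold Rdist. rewrite Rminus_diag, Rabs_R0. lra.
Qed.
Lemma ER_le_total a b : ~ ER_le a b -> ER_le b a.
Proof. destruct a, b; simpl; auto; intros; lra. Qed.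

Lemma ER_le_trans a b c : ER_le a b -> ER_le b c -> ER_le a c.
Proof. destruct a, b, c; simpl; auto; intros; try lra; contradiction. Qed.

Lemma ER_le_antisym a b : ER_le a b -> ER_le b a -> a = b.
Proof. destruct a, b; simpl; intros; try contradiction; auto. f_equal; lra. Qed.

Lemma ER_max_le a b c : ER_le (ER_max a b) c -> ER_le a c /\ ER_le b c.
Proof. destruct a, b, c; simpl; intros; try contradiction; auto.
  split; [apply Rle_trans with (Rmax r r0); [apply Rmax_l|auto]|apply Rle_trans with (Rmax r r0); [apply Rmax_r|auto]].
Qed.

Lemma le_ER_max a b s : ER_le a (Fin s) -> ER_le b (Fin s) -> ER_le (ER_max a b) (Fin s).
Proof. destruct a, b; simpl; intros; try contradiction. apply Rmax_lub; auto. Qed.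

Lemma maxER_le m f c : ER_le (maxER m f) c -> forall i, (i < m)%nat -> ER_le (f i) c.
Proof.
  induction m; simpl; intros H i Hi. lia. apply ER_max_le in H. destruct H.
  destruct (Nat.eq_dec i m). subst; auto. apply IHm; auto; lia.
Qed.

Lemma le_maxER m f s : 0 <= s -> (forall i, (i < m)%nat -> ER_le (f i) (Fin s)) ->
  ER_le (maxER m f) (Fin s).
Proof. induction m; simpl; intros Hs H. auto. apply le_ER_max; auto. Qed.

Lemma maxER_ge m f i : (i < m)%nat -> ER_le (f i) (maxER m f).
Proof.
  induction m; simpl; intros Hi. lia.
  destruct (Nat.eq_dec i m).
  - subst. destruct (maxER m f), (f m); simpl; auto. apply Rmax_r.
  - apply ER_le_trans with (maxER m f). apply IHm; lia.
    destruct (maxER m f), (f m); simpl; auto. apply Rmax_l.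
Qed.

Lemma maxER_ge0 m f : ER_le (Fin 0) (maxER m f).
Proof. induction m; simpl. lra. destruct (maxER m f), (f m); simpl in *; auto.
  apply Rle_trans with r; auto. apply Rmax_l. Qed.

Lemma quot_le a b s : 0 <= a -> 0 <= b -> ER_le (quot a b) (Fin s) -> a <= s * b.
Proof.
  unfold quot; intros Ha Hb. destruct (Req_EM_T b 0).
  - destruct (Req_EM_T a 0); simpl; intros; try contradiction. subst. lra.
  - simpl. intros H. assert (0 < b) by lra.
    apply Rmult_le_compat_r with (r := b) in H; [|lra].
    field_simplify in H; lra.
Qed.

Lemma le_quot a b s : 0 <= a -> 0 <= b -> 0 <= s -> a <= s * b -> ER_le (quot a b) (Fin s).
Proof.
  unfold quot; intros Ha Hb Hs H. destruct (Req_EM_T b 0).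
  - subst. destruct (Req_EM_T a 0); simpl; auto. lra.
  - simpl. assert (0 < b) by lra. apply Rmult_le_reg_r with b; auto.
    field_simplify; lra.
Qed.

Section RAB.
Variables (m n : nat) (A B : nat -> nat -> R).
Hypotheses (HA : nonneg_mat m n A) (HB : nonneg_mat m n B).

Lemma rAB_le x s : (forall j, (j < n)%nat -> 0 <= x j) ->
  ER_le (rAB m n A B x) (Fin s) -> forall i, (i < m)%nat -> mulv n A x i <= s * mulv n B x i.
Proof.
  intros Hx H i Hi. apply quot_le. apply (mulv_nonneg m); auto. apply (mulv_nonneg m); auto.
  exact (maxER_le m _ _ H i Hi).
Qed.

Lemma le_rAB x s : (forall j, (j < n)%nat -> 0 <= x j) -> 0 <= s ->
  (forall i, (i < m)%nat -> mulv n A x i <= s * mulv n B x i) -> ER_le (rAB m n A B x) (Fin s).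
Proof.
  intros Hx Hs H. apply le_maxER; auto. intros i Hi. apply le_quot; auto.
  apply (mulv_nonneg m); auto. apply (mulv_nonneg m); auto.
Qed.

End RAB.
Lemma inf_exists (S : ER -> Prop) : (forall w, S w -> ER_le (Fin 0) w) -> exists v, is_inf_ER S v.
Proof.
  intros H0. destruct (classic (exists x, S (Fin x))) as [[x0 Hx0]|Hn].
  - set (E := fun y => S (Fin (- y))).
    assert (Hb : bound E). { exists 0. intros y Hy. apply H0 in Hy. simpl in Hy. lra. }
    assert (He : exists y, E y). { exists (- x0). unfold E. rewrite Ropp_involutive. auto. }
    destruct (completeness E Hb He) as [l [Hl1 Hl2]].
    exists (Fin (- l)). split.
    + intros [x|] Hw; simpl; auto. assert (E (- x)) by (unfold E; rewrite Ropp_involutive; auto).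
      apply Hl1 in H. lra.
    + intros [a|] Hu; simpl.
      * assert (l <= - a). { apply Hl2. intros y Hy. apply Hu in Hy. simpl in Hy. lra. } lra.
      * apply (Hu _ Hx0).
  - exists Inf. split.
    + intros [x|] Hw; simpl; auto. apply Hn; eauto.
    + intros u _. destruct u; simpl; auto.
Qed.

Lemma inf_approx S t eps : is_inf_ER S (Fin t) -> eps > 0 ->
  exists w, S w /\ ER_le w (Fin (t + eps)).
Proof.
  intros [H1 H2] He. apply NNPP. intro C.
  assert (ER_le (Fin (t + eps)) (Fin t)).
  { apply H2. intros w Hw. apply ER_le_total. intro. apply C. eauto. }
  simpl in H. lra.
Qed.

Lemma inf_member S v w : is_inf_ER S v -> S w -> ER_le w v -> is_inf_ER S w.
Proof.
  intros [H1 H2] Hw Hle. split.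
  - intros w' Hw'. apply ER_le_trans with v; auto.
  - intros u Hu. apply Hu; auto.
Qed.

Lemma KEY m n A B (Rw : nat -> Prop) (t : R) (x : nat -> nat -> R) (e : nat -> R) :
  (forall k j, (j < n)%nat -> 0 <= x k j) ->
  (forall k, 0 < sumR n (x k)) ->
  Un_cv e 0 ->
  (forall k i, (i < m)%nat -> Rw i -> mulv n A (x k) i <= (t + e k) * mulv n B (x k) i) ->
  exists z, (forall j, (j < n)%nat -> 0 <= z j) /\ sumR n z = 1 /\
    (forall i, (i < m)%nat -> Rw i -> mulv n A z i <= t * mulv n B z i) /\
    (forall j, (j < n)%nat -> (forall k, x k j = 0) -> z j = 0).
Proof.
  intros Hx Hs He Hr.
  set (x' := fun k j => / sumR n (x k) * x k j).
  assert (Hx' : forall k j, (j < n)%nat -> 0 <= x' k j <= 1).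
  { intros k j Hj. unfold x'. specialize (Hs k). pose proof (Hx k j Hj).
    pose proof (sumR_ge_term n (x k) j (Hx k) Hj). split.
    - apply Rmult_le_pos; auto. left; apply Rinv_0_lt_compat; auto.
    - apply Rmult_le_reg_l with (sumR n (x k)); auto. field_simplify; lra. }
  destruct (BWn n x' Hx') as [phi [z [Hp Hz]]].
  assert (Hc0 : forall c, Un_cv (fun _ : nat => c) c).
  { intros c eps Heps. exists O. intros. unfold Rdist. rewrite Rminus_diag, Rabs_R0. lra. }
  exists z. split; [|split; [|split]].
  - intros j Hj. apply (@Rle_cv_lim (fun _ => 0) (fun k => x' (phi k) j)); auto.
    intros; apply Hx'; auto.
  - assert (Hsum : forall k, sumR n (x' k) = 1).
    { intro k. unfold x'. rewrite sumR_scal. field. specialize (Hs k). lra. }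
    pose proof (sum_cv n (fun k => x' (phi k)) z Hz) as Hcv.
    apply Rle_antisym.
    + apply (@Rle_cv_lim (fun k => sumR n (x' (phi k))) (fun _ => 1)); auto.
      intros; rewrite Hsum; lra.
    + apply (@Rle_cv_lim (fun _ => 1) (fun k => sumR n (x' (phi k)))); auto.
      intros; rewrite Hsum; lra.
  - intros i Hi HR.
    apply (@Rle_cv_lim (fun k => mulv n A (x' (phi k)) i)
                      (fun k => (t + e (phi k)) * mulv n B (x' (phi k)) i)).
    + intro k. unfold x'. rewrite !mulv_scal.
      specialize (Hs (phi k)). pose proof (Hr (phi k) i Hi HR).
      assert (0 < / sumR n (x (phi k))) by (apply Rinv_0_lt_compat; auto).
      apply Rmult_le_compat_l with (r := / sumR n (x (phi k))) in H; [|lra]. lra.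
    + apply mulv_cv; auto.
    + replace (t * mulv n B z i) with ((t + 0) * mulv n B z i) by ring.
      apply CV_mult. apply CV_plus. apply Hc0. apply cv_sub; auto. apply mulv_cv; auto.
  - intros j Hj H0. assert (Hz0 : forall k, x' (phi k) j = 0).
    { intro k. unfold x'. rewrite H0. ring. }
    apply Rle_antisym.
    + apply (@Rle_cv_lim (fun k => x' (phi k) j) (fun _ => 0)); auto. intros; rewrite Hz0; lra.
    + apply (@Rle_cv_lim (fun _ => 0) (fun k => x' (phi k) j)); auto. intros; rewrite Hz0; lra.
Qed.
Fixpoint cnt (n : nat) (y : nat -> R) : nat :=
  match n with O => O | S k => (cnt k y + if Rlt_dec 0 (y k) then 1 else 0)%nat end.

Lemma cnt_le n y : (cnt n y <= n)%nat.
Proof. induction n; simpl; auto. destruct (Rlt_dec 0 (y n)); lia. Qed.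

Lemma cnt_mono n y y' : (forall j, (j < n)%nat -> 0 < y j -> 0 < y' j) -> (cnt n y <= cnt n y')%nat.
Proof.
  induction n; simpl; intros H; auto.
  pose proof (IHn ltac:(auto)).
  destruct (Rlt_dec 0 (y n)) as [p|p], (Rlt_dec 0 (y' n)) as [q|q]; try lia. exfalso; apply q; auto.
Qed.

Lemma cnt_lt n y y' j1 : (forall j, (j < n)%nat -> 0 < y j -> 0 < y' j) ->
  (j1 < n)%nat -> 0 < y' j1 -> ~ 0 < y j1 -> (cnt n y < cnt n y')%nat.
Proof.
  induction n; simpl; intros H Hj H1 H2. lia.
  destruct (Nat.eq_dec j1 n).
  - subst. pose proof (cnt_mono n y y' ltac:(auto)).
    destruct (Rlt_dec 0 (y n)), (Rlt_dec 0 (y' n)); try contradiction; lia.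
  - pose proof (IHn ltac:(auto) ltac:(lia) H1 H2).
    destruct (Rlt_dec 0 (y n)) as [p|p], (Rlt_dec 0 (y' n)) as [q|q]; try lia. exfalso; apply q; auto.
Qed.


Lemma min_eps m (P : nat -> R -> Prop) :
  (forall i, (i < m)%nat -> exists e, e > 0 /\ forall e', 0 < e' <= e -> P i e') ->
  exists e, e > 0 /\ forall i, (i < m)%nat -> forall e', 0 < e' <= e -> P i e'.
Proof.
  induction m; intros H.
  - exists 1. split. lra. intros; lia.
  - destruct IHm as [e1 [He1 H1]]. { intros; apply H; lia. }
    destruct (H m ltac:(lia)) as [e2 [He2 H2]].
    exists (Rmin e1 e2). split. apply Rmin_case; lra.
    intros i Hi e' He'. pose proof (Rmin_l e1 e2). pose proof (Rmin_r e1 e2).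
    destruct (Nat.eq_dec i m).
    + subst. apply H2. lra.
    + apply H1. lia. lra.
Qed.

Section Main.
Variables (m n : nat) (A B : nat -> nat -> R).
Hypotheses (HA : nonneg_mat m n A) (HB : nonneg_mat m n B).
Variables (t : R) (x : nat -> nat -> R).
Hypothesis Ht : 0 <= t.
Hypothesis Hxpos : forall k, positive_vec n (x k).
Hypothesis Hxr : forall k i, (i < m)%nat -> mulv n A (x k) i <= (t + / INR (S k)) * mulv n B (x k) i.
Hypothesis Hlow : forall y, positive_vec n y -> ER_le (Fin t) (rAB m n A B y).

Definition Ct y := (forall j, (j < n)%nat -> 0 <= y j) /\
  forall i, (i < m)%nat -> mulv n A y i <= t * mulv n B y i.

Lemma step y : Ct y -> (exists j, (j < n)%nat /\ 0 < y j) ->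
  ER_le (Fin t) (rAB m n A B y) \/
  exists y', Ct y' /\ (exists j, (j < n)%nat /\ 0 < y' j) /\ (cnt n y < cnt n y')%nat.
Proof.
  intros [Hy0 Hy1] Hnz.
  destruct (classic (ER_le (Fin t) (rAB m n A B y))) as [Hle|Hnle]; [left; auto|right].
  destruct (rAB m n A B y) as [a|] eqn:Er; [|simpl in Hnle; tauto].
  simpl in Hnle. assert (Hat : a < t) by lra.
  assert (Hya : forall i, (i < m)%nat -> mulv n A y i <= a * mulv n B y i).
  { apply rAB_le; auto. rewrite Er. simpl. lra. }
  assert (Hj0 : exists j0, (j0 < n)%nat /\ y j0 = 0).
  { apply NNPP. intro C.
    assert (H' : ER_le (Fin t) (rAB m n A B y)).
    { apply Hlow. intros j Hj.
      destruct (Rle_lt_or_eq_dec 0 (y j) (Hy0 j Hj)); auto. exfalso; apply C; eauto. }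
    rewrite Er in H'. simpl in H'. lra. }
  destruct Hj0 as [j0 [Hj0 Hyj0]].
  set (x' := fun k j => if Req_EM_T (y j) 0 then x k j else 0).
  set (Rw := fun i => mulv n B y i = 0).
  assert (HRw : forall i, (i < m)%nat -> Rw i ->
     mulv n A y i = 0 /\ (forall k, mulv n A (x' k) i = mulv n A (x k) i) /\
     (forall k, mulv n B (x' k) i = mulv n B (x k) i)).
  { intros i Hi HR. unfold Rw in HR.
    assert (HAy : mulv n A y i = 0).
    { pose proof (Hy1 i Hi). pose proof (mulv_nonneg m n A y i HA Hi Hy0). rewrite HR in H. lra. }
    assert (HAt : forall j, (j < n)%nat -> A i j * y j = 0).
    { apply sumR_zero; auto. intros; apply Rmult_le_pos; auto. }
    assert (HBt : forall j, (j < n)%nat -> B i j * y j = 0).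
    { apply sumR_zero; auto. intros; apply Rmult_le_pos; auto. }
    split; auto. split; intro k; unfold mulv; apply sumR_ext; intros j Hj; unfold x';
      destruct (Req_EM_T (y j) 0); auto.
    - destruct (Rmult_integral _ _ (HAt j Hj)) as [E|E]; [rewrite E; ring|contradiction].
    - destruct (Rmult_integral _ _ (HBt j Hj)) as [E|E]; [rewrite E; ring|contradiction]. }
  destruct (KEY m n A B Rw t x' (fun k => / INR (S k))) as [z [Hz0 [Hz1 [Hz2 Hz3]]]].
  - intros k j Hj. unfold x'. destruct (Req_EM_T (y j) 0). left; apply Hxpos; auto. lra.
  - intro k. apply Rlt_le_trans with (x' k j0).
    + unfold x'. destruct (Req_EM_T (y j0) 0); [apply Hxpos; auto|contradiction].
    + apply sumR_ge_term; auto. intros j Hj. unfold x'. destruct (Req_EM_T (y j) 0). left; apply Hxpos; auto. lra.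
  - apply cv_inv_S.
  - intros k i Hi HR. destruct (HRw i Hi HR) as [_ [E1 E2]]. rewrite E1, E2. auto.
  - destruct (sumR_pos n z Hz0 ltac:(lra)) as [j1 [Hj1 Hzj1]].
    assert (Hyj1 : y j1 = 0).
    { apply NNPP. intro C. assert (z j1 = 0). { apply Hz3; auto. intro k. unfold x'.
        destruct (Req_EM_T (y j1) 0); auto; contradiction. } lra. }
    destruct (min_eps m (fun i e => mulv n A (fun j => y j + e * z j) i <=
                                     t * mulv n B (fun j => y j + e * z j) i)) as [eps [Heps Hall]].
    { intros i Hi. destruct (Req_EM_T (mulv n B y i) 0) as [E|E].
      - exists 1. split. lra. intros e' He'. rewrite !mulv_lin.
        destruct (HRw i Hi E) as [HAy _]. rewrite HAy, E.
        pose proof (Hz2 i Hi E). nra.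
      - assert (HBy : 0 < mulv n B y i).
        { pose proof (mulv_nonneg m n B y i HB Hi Hy0). lra. }
        set (g := (t - a) * mulv n B y i).
        set (D := mulv n A z i - t * mulv n B z i).
        assert (Hg : 0 < g) by (unfold g; nra).
        pose proof (Rabs_pos D). pose proof (Rle_abs D).
        exists (g / (1 + Rabs D)). split. apply Rdiv_lt_0_compat; lra.
        intros e' He'. rewrite !mulv_lin.
        assert (e' * Rabs D <= g).
        { apply Rle_trans with (g / (1 + Rabs D) * Rabs D). apply Rmult_le_compat_r; lra.
          apply Rmult_le_reg_r with (1 + Rabs D). lra. field_simplify; try lra. }
        pose proof (Hya i Hi). unfold g, D in *. nra. }
    exists (fun j => y j + eps * z j). split; [split|split].
    + intros j Hj. pose proof (Hy0 j Hj). pose proof (Hz0 j Hj). nra.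
    + intros i Hi. apply Hall; auto. lra.
    + exists j1. split; auto. rewrite Hyj1. nra.
    + apply (cnt_lt n y _ j1); auto.
      * intros j Hj Hp. pose proof (Hz0 j Hj). nra.
      * rewrite Hyj1. nra.
      * rewrite Hyj1. lra.
Qed.

Lemma iterate d : forall y, Ct y -> (exists j, (j < n)%nat /\ 0 < y j) -> (n - cnt n y <= d)%nat ->
  exists y', Ct y' /\ (exists j, (j < n)%nat /\ 0 < y' j) /\ ER_le (Fin t) (rAB m n A B y').
Proof.
  induction d; intros y Hy Hnz Hd; destruct (step y Hy Hnz) as [H|[y' [H1 [H2 H3]]]];
    try (exists y; auto; fail).
  - pose proof (cnt_le n y'). lia.
  - apply (IHd y'); auto. pose proof (cnt_le n y'). lia.
Qed.

End Main.

Lemma ones_pos n : positive_vec n (fun _ => 1).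
Proof. intros j _; lra. Qed.

Lemma ones_nz n : (1 <= n)%nat -> nonneg_nonzero n (fun _ => 1).
Proof. intros Hn. split. intros; lra. exists O. split. lia. lra. Qed.

Lemma cv_ER_const w : cv_ER (fun _ => w) w.
Proof.
  destruct w as [a|]; simpl.
  - intros eps He. exists O. intros k _. exists a. split; auto. rewrite Rminus_diag, Rabs_R0; lra.
  - intros M. exists O. intros; auto.
Qed.

Lemma nz_sum_pos n y : nonneg_nonzero n y -> 0 < sumR n y.
Proof.
  intros [H0 [j [Hj Hne]]]. apply Rlt_le_trans with (y j).
  pose proof (H0 j Hj). lra. apply sumR_ge_term; auto.
Qed.

Lemma sum1_nz n z : (forall j, (j < n)%nat -> 0 <= z j) -> sumR n z = 1 -> nonneg_nonzero n z.
Proof.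
  intros H0 H1. destruct (sumR_pos n z H0 ltac:(lra)) as [j [Hj Hp]].
  split; auto. exists j. split; auto. lra.
Qed.

Lemma inf_nonneg S t : is_inf_ER S (Fin t) -> (forall w, S w -> ER_le (Fin 0) w) -> 0 <= t.
Proof. intros [_ H] H0. exact (H (Fin 0) H0). Qed.

Theorem lemma2p4 (m n : nat) (A B : nat -> nat -> R) :
  (1 <= m)%nat -> (1 <= n)%nat ->
  nonneg_mat m n A -> nonneg_mat m n B ->
  (exists y, nonneg_nonzero n y /\ is_rho_hat m n A B (rAB m n A B y)) /\
  (exists y, nonneg_nonzero n y /\ is_rho m n A B (rAB m n A B y) /\
     exists yk : nat -> nat -> R,
       (forall k, positive_vec n (yk k)) /\
       (forall j, (j < n)%nat -> Un_cv (fun k => yk k j) (y j)) /\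
       cv_ER (fun k => rAB m n A B (yk k)) (rAB m n A B y)).
Proof.
  intros Hm Hn HA HB. split.
  - set (SS := fun w => exists x, nonneg_nonzero n x /\ w = rAB m n A B x).
    destruct (inf_exists SS) as [v Hv].
    { intros w [x [_ ->]]. apply maxER_ge0. }
    destruct v as [t|].
    + assert (Ht : 0 <= t). { apply (inf_nonneg SS); auto. intros w [x [_ ->]]. apply maxER_ge0. }
      destruct (choice_vec (fun k x => nonneg_nonzero n x /\
           ER_le (rAB m n A B x) (Fin (t + / INR (S k))))) as [x Hx].
      { intro k. assert (/ INR (S k) > 0) by (apply Rinv_0_lt_compat, lt_0_INR; lia).
        destruct (inf_approx SS t _ Hv H) as [w [[x [Hx ->]] Hw]]. eauto. }
      destruct (KEY m n A B (fun _ => True) t x (fun k => / INR (S k))) as [z [Hz0 [Hz1 [Hz2 _]]]].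
      * intros k j Hj. apply (proj1 (Hx k)); auto.
      * intro k. apply nz_sum_pos. apply Hx.
      * apply cv_inv_S.
      * intros k i Hi _. apply (rAB_le m n A B); auto. apply (proj1 (Hx k)). apply Hx.
      * exists z. split. apply sum1_nz; auto.
        apply (inf_member SS (Fin t)); auto. exists z. split; auto. apply sum1_nz; auto.
        apply le_rAB; auto.
    + exists (fun _ => 1). split. apply ones_nz; auto.
      apply (inf_member SS Inf); auto. exists (fun _ : nat => 1). split; auto. apply ones_nz; auto.
      simpl. destruct (rAB m n A B (fun _ => 1)); exact I.
  - set (SS := fun w => exists x, positive_vec n x /\ w = rAB m n A B x).
    destruct (inf_exists SS) as [v Hv].
    { intros w [x [_ ->]]. apply maxER_ge0. }
    destruct v as [t|].
    + assert (Ht : 0 <= t). { apply (inf_nonneg SS); auto. intros w [x [_ ->]]. apply maxER_ge0. }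
      assert (Hlow : forall y, positive_vec n y -> ER_le (Fin t) (rAB m n A B y)).
      { intros y Hy. apply (proj1 Hv). exists y; auto. }
      destruct (choice_vec (fun k x => positive_vec n x /\
           ER_le (rAB m n A B x) (Fin (t + / INR (S k))))) as [x Hx].
      { intro k. assert (/ INR (S k) > 0) by (apply Rinv_0_lt_compat, lt_0_INR; lia).
        destruct (inf_approx SS t _ Hv H) as [w [[x [Hx ->]] Hw]]. eauto. }
      assert (Hxpos : forall k, positive_vec n (x k)) by apply Hx.
      assert (Hxnn : forall k j, (j < n)%nat -> 0 <= x k j) by (intros; left; apply Hxpos; auto).
      assert (Hxr : forall k i, (i < m)%nat ->
                mulv n A (x k) i <= (t + / INR (S k)) * mulv n B (x k) i).
      { intros k i Hi. apply (rAB_le m n A B); auto. apply Hx. }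
      destruct (KEY m n A B (fun _ => True) t x (fun k => / INR (S k))) as [z [Hz0 [Hz1 [Hz2 _]]]].
      * auto.
      * intro k. apply nz_sum_pos. split; auto. exists O. split. lia.
        pose proof (Hxpos k O ltac:(lia)). lra.
      * apply cv_inv_S.
      * intros k i Hi _. auto.
      * destruct (iterate m n A B HA HB t x Hxpos Hxr Hlow n z) as [y [[Hy0 Hy1] [[j1 [Hj1 Hyj1]] Hyt]]].
        -- split; auto.
        -- destruct (sumR_pos n z Hz0 ltac:(lra)) as [j [Hj Hp]]. eauto.
        -- lia.
        -- assert (Er : rAB m n A B y = Fin t).
           { apply ER_le_antisym; auto. apply le_rAB; auto. }
           exists y. split; [|split].
           ++ split; auto. exists j1. split; auto. lra.
           ++ rewrite Er. exact Hv.
           ++ set (dl := fun k => / (INR (S k) * (1 + sumR n (x k)))).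
              assert (Hsx : forall k, 0 <= sumR n (x k)) by (intro; apply sumR_nonneg; auto).
              assert (Hdl : forall k, 0 < dl k).
              { intro k. unfold dl. apply Rinv_0_lt_compat. apply Rmult_lt_0_compat.
                apply lt_0_INR; lia. pose proof (Hsx k); lra. }
              assert (Hdlx : forall k j, (j < n)%nat -> dl k * x k j <= / INR (S k)).
              { intros k j Hj. unfold dl. pose proof (sumR_ge_term n (x k) j (Hxnn k) Hj).
                pose proof (lt_0_INR (S k) ltac:(lia)). pose proof (Hsx k).
                rewrite Rinv_mult. 
                apply Rle_trans with (/ INR (S k) * / (1 + sumR n (x k)) * (1 + sumR n (x k))).
                - apply Rmult_le_compat_l. left. apply Rmult_lt_0_compat; apply Rinv_0_lt_compat; lra.
                  lra.
                - right. field. lra. }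
              exists (fun k j => y j + dl k * x k j). split; [|split].
              ** intros k j Hj. pose proof (Hy0 j Hj). pose proof (Hdl k). pose proof (Hxpos k j Hj). nra.
              ** intros j Hj eps He. destruct (cv_inv_S eps He) as [N HN]. exists N.
                 intros k Hk. specialize (HN k Hk). unfold Rdist in *.
                 rewrite Rminus_0_r, Rabs_right in HN by (left; apply Rinv_0_lt_compat, lt_0_INR; lia).
                 replace (y j + dl k * x k j - y j) with (dl k * x k j) by ring.
                 pose proof (Hdl k). pose proof (Hxpos k j Hj). pose proof (Hdlx k j Hj).
                 rewrite Rabs_right by nra. lra.
              ** rewrite Er. simpl. intros eps He. destruct (cv_inv_S eps He) as [N HN]. exists N.
                 intros k Hk. specialize (HN k Hk). unfold Rdist in *.
                 assert (He0 : 0 < / INR (S k)) by (apply Rinv_0_lt_compat, lt_0_INR; lia).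
                 rewrite Rminus_0_r, Rabs_right in HN by lra.
                 assert (Hp : positive_vec n (fun j => y j + dl k * x k j)).
                 { intros j Hj. pose proof (Hy0 j Hj). pose proof (Hdl k). pose proof (Hxpos k j Hj). nra. }
                 assert (Hup : ER_le (rAB m n A B (fun j => y j + dl k * x k j)) (Fin (t + / INR (S k)))).
                 { apply le_rAB; auto. intros j Hj; left; apply Hp; auto. lra.
                   intros i Hi. rewrite !mulv_lin. pose proof (Hy1 i Hi). pose proof (Hxr k i Hi).
                   pose proof (mulv_nonneg m n B y i HB Hi Hy0). pose proof (Hdl k).
                   pose proof (mulv_nonneg m n B (x k) i HB Hi (Hxnn k)). nra. }
                 pose proof (Hlow _ Hp) as Hdown.
                 destruct (rAB m n A B (fun j => y j + dl k * x k j)) as [r|]; simpl in *; [|contradiction].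
                 exists r. split; auto. rewrite Rabs_right by lra. lra.
    + exists (fun _ => 1). assert (Hinf : rAB m n A B (fun _ => 1) = Inf).
      { assert (H : ER_le Inf (rAB m n A B (fun _ => 1))).
        { apply (proj1 Hv). exists (fun _ : nat => 1). split; auto. apply ones_pos. }
        destruct (rAB m n A B (fun _ => 1)); simpl in H; auto. contradiction. }
      split. apply ones_nz; auto. rewrite Hinf. split; [exact Hv|].
      exists (fun _ _ => 1). split; [|split].
      * intros; apply ones_pos.
      * intros j _. apply cv_const.
      * rewrite Hinf. apply cv_ER_const.
Qed.
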